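(* Let $n\ge 1$ and $k\ge 3$ be integers. The number of vertices of the $k$-Pell graph $\Pi_{n,k}$ of degree $\Delta(\Pi_{n,k})-1=2n-1$ equals $$n\,(k-2)^{n-1}+\sum_{\ell=1}^{n}(n-\ell+1)\,(k-2)^{n-\ell}.$$
   Context: For an integer $k\ge 2$, a $k$-Pell string is a finite word over the alphabet $\{0,1,\ldots,k-1,kk\}$, i.e. a word over $\{0,1,\ldots,k\}$ in which every maximal run of the letter $k$ has even length. For $n\ge 0$, the $k$-Pell graph $\Pi_{n,k}$ has as vertices all $k$-Pell strings of length $n$, and two vertices are adjacent if one is obtained from the other either by replacing a single letter $i$ by $i+1$ (or vice versa) for some $i\in\{0,1,\ldots,k-2\}$, or by replacing one factor $(k-1)(k-1)$ by $kk$ (or vice versa), in such a way that the resulting string is again a $k$-Pell string. $\Delta(G)$ denotes the maximum degree of $G$. *)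

(* Defs.v *)
From mathcomp Require Import all_boot.
Set Implicit Arguments. Unset Strict Implicit. Unset Printing Implicit Defensive.

(* A word over {0,...,k} (letters as nats) is a k-Pell string iff it is a word
   over the alphabet {0,1,...,k-1, kk}, i.e. every maximal run of k has even length. *)
Fixpoint is_pell (k : nat) (s : seq nat) : bool :=
  match s with
  | [::] => true
  | x :: s' =>
      if x == k then
        match s' with
        | y :: s'' => (y == k) && is_pell k s''
        | [::] => false
        end
      else is_pell k s'
  end.

Definition word (n k : nat) := n.-tuple 'I_k.+1.

Definition pellw n k (u : word n k) : bool := is_pell k [seq val x | x <- u].

Definition step1 n k (u v : word n k) : bool :=
  [exists i : 'I_n,
     [forall j : 'I_n, (j != i) ==> (tnth u j == tnth v j)] &&
     [&& ((tnth u i).+1 == tnth v i) || ((tnth v i).+1 == tnth u i),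
         val (tnth u i) < k & val (tnth v i) < k]].

Definition step2 n k (u v : word n k) : bool :=
  [exists i : 'I_n, exists j : 'I_n,
     [&& val j == (val i).+1,
         [forall l : 'I_n, ((l != i) && (l != j)) ==> (tnth u l == tnth v l)],
         val (tnth u i) == k.-1, val (tnth u j) == k.-1,
         val (tnth v i) == k & val (tnth v j) == k]].

Definition pell_adj n k (u v : word n k) : bool :=
  [&& pellw u, pellw v & [|| step1 u v, step2 u v | step2 v u]].

Definition pell_vertices n k : {set word n k} := [set v | pellw v].

Definition pell_deg n k (v : word n k) : nat := #|[set w | pell_adj v w]|.

Definition pell_maxdeg n k : nat := \max_(v in pell_vertices n k) pell_deg v.

(* Main.v *)
Require Import Defs.
From mathcomp Require Import all_boot.
From mathcomp Require Import zify.
Set Implicit Arguments. Unset Strict Implicit. Unset Printing Implicit Defensive.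


Definition sv n k (u : word n k) : seq nat := [seq val x | x <- u].

Definition adjl k a b := [&& (a.+1 == b) || (b.+1 == a), a < k & b < k].

Fixpoint st1 k (s t : seq nat) : bool :=
  match s, t with
  | a :: s', b :: t' => ((a == b) && st1 k s' t') || (adjl k a b && (s' == t'))
  | _, _ => false
  end.

Definition hp k (s t : seq nat) : bool :=
  match s, t with
  | a :: s', b :: t' => [&& a == k.-1, b == k & s' == t']
  | _, _ => false
  end.

Fixpoint st2 k (s t : seq nat) : bool :=
  match s, t with
  | a :: s', b :: t' => ((a == b) && st2 k s' t') || [&& a == k.-1, b == k & hp k s' t']
  | _, _ => false
  end.

Lemma existsS n (P : pred 'I_n.+1) :
  [exists i, P i] = P ord0 || [exists i : 'I_n, P (lift ord0 i)].
Proof.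
apply/existsP/orP => [[i Pi]|[P0|/existsP[i Pi]]]; last by exists (lift ord0 i).
- case: (unliftP ord0 i) Pi => [j ->|->] Pi; [right; apply/existsP; by exists j | by left].
- by exists ord0.
Qed.

Lemma forallS n (P : pred 'I_n.+1) :
  [forall i, P i] = P ord0 && [forall i : 'I_n, P (lift ord0 i)].
Proof.
apply/forallP/andP => [H|[P0 /forallP H] i]; first by split => //; apply/forallP.
by case: (unliftP ord0 i) => [j ->|->].
Qed.

Lemma sv_cons n k (x : 'I_k.+1) (u : word n k) :
  sv [tuple of x :: u] = val x :: sv u.
Proof. by []. Qed.

Lemma sv_inj n k : injective (@sv n k).
Proof. move=> u v /(inj_map val_inj) H; exact: val_inj. Qed.

Lemma tuple_eqE n k (u v : word n k) :
  [forall j, tnth u j == tnth v j] = (sv u == sv v).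
Proof.
apply/forallP/eqP => [H|/sv_inj -> //].
by congr sv; apply: eq_from_tnth => j; apply/eqP.
Qed.

Lemma step1E n k (u v : n.-tuple 'I_k.+1) : step1 u v = st1 k (sv u) (sv v).
Proof.
elim: n u v => [|n IH] u v.
  rewrite (tuple0 u) (tuple0 v) /=; apply/negbTE/existsP => -[[]] //.
case: u / tupleP => a u; case: v / tupleP => b v.
rewrite !sv_cons /= -IH /step1 existsS forallS /= !tnth0.
rewrite (_ : [forall i, _] = (sv u == sv v)); last first.
  by rewrite -tuple_eqE; apply: eq_forallb => j; rewrite !tnthS.
rewrite orbC; congr orb; last by rewrite /adjl andbC.
under eq_existsb => i do rewrite forallS /= !tnth0 !tnthS.
apply/existsP/andP => [[i /and4P[/andP[ab H1] H2 H3 H4]]|[ab /existsP[i /and4P[H1 H2 H3 H4]]]].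
  split=> //.
  apply/existsP; exists i; rewrite H2 H3 H4 !andbT.
  apply/forallP => j; apply/implyP => ji; move/forallP: H1 => /(_ j).
  by rewrite (inj_eq lift_inj) ji !tnthS.
exists i; rewrite H2 H3 H4 !andbT; apply/andP; split=> //.
apply/forallP => j; rewrite (inj_eq lift_inj) !tnthS; exact: (forallP H1 j).
Qed.


Lemma hpE n k (u v : n.-tuple 'I_k.+1) (a b : 'I_k.+1) :
  [exists j : 'I_n.+1, [&& val j == 1,
      [forall l, ((l != ord0) && (l != j)) ==> (tnth [tuple of a :: u] l == tnth [tuple of b :: v] l)],
      val a == k.-1, val (tnth [tuple of a :: u] j) == k.-1, val b == k
    & val (tnth [tuple of b :: v] j) == k]]
  = [&& val a == k.-1, val b == k & hp k (sv u) (sv v)].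
Proof.
case: n u v => [|n] u v.
  rewrite (tuple0 u) (tuple0 v) /= !andbF.
  by apply/negbTE/existsP => -[[m Hm] /andP[/= /eqP Hj _]]; move: Hm; rewrite Hj.
case: u / tupleP => c u; case: v / tupleP => d v.
rewrite !sv_cons /=.
apply/existsP/idP => [[j /and5P[Hj Hl Ha Hc /andP[Hb Hd]]]|/and3P[Ha Hb /and3P[Hc Hd /eqP Huv]]].
  have ej : j = lift ord0 ord0 by apply: val_inj; rewrite /= (eqP Hj).
  rewrite ej in Hc Hd Hl.
  rewrite !tnthS !tnth0 in Hc Hd.
  rewrite Ha Hb Hc Hd /=; rewrite -tuple_eqE; apply/forallP => l.
  move/forallP: Hl => /(_ (lift ord0 (lift ord0 l))).
  rewrite (eq_sym _ ord0) neq_lift /=.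
  by rewrite !tnthS.
exists (lift ord0 ord0); rewrite !tnthS !tnth0 Ha Hb Hc Hd !andbT /=.
apply/forallP => l; apply/implyP => /andP[l0 l1].
case: (unliftP ord0 l) l0 l1 => [l' ->|->] // _; rewrite (inj_eq lift_inj) !tnthS => l1.
case: (unliftP ord0 l') l1 => [l'' ->|->] //; rewrite !tnthS => _.
by move/sv_inj: Huv => ->.
Qed.

Lemma vlift n (i : 'I_n.+1.-1) : val (lift (@ord0 n) i) = (val i).+1.
Proof. by []. Qed.

Lemma step2E n k (u v : n.-tuple 'I_k.+1) : step2 u v = st2 k (sv u) (sv v).
Proof.
elim: n u v => [|n IH] u v.
  by rewrite (tuple0 u) (tuple0 v) /=; apply/negbTE/existsP => -[[]] //.
case: u / tupleP => a u; case: v / tupleP => b v.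
rewrite !sv_cons /= -IH -hpE /step2 existsS orbC; congr orb.
apply/existsP/andP => [[i /existsP[j /and5P[Hj Hl Ha Hc /andP[Hb Hd]]]]|[ab /existsP[i /existsP[j /and5P[Hj Hl Ha Hc /andP[Hb Hd]]]]]].
  case: (unliftP ord0 j) Hj Hl Hc Hd => [j' ->|->]; last by rewrite vlift.
  rewrite !vlift eqSS !tnthS => Hj Hl Hc Hd.
  rewrite !tnthS in Ha Hb; split.
    by move/forallP: Hl => /(_ ord0); rewrite !neq_lift /= !tnth0.
  apply/existsP; exists i; apply/existsP; exists j'; rewrite Hj Ha Hb Hc Hd !andbT.
  apply/forallP => l; move/forallP: Hl => /(_ (lift ord0 l)).
  by rewrite !(inj_eq lift_inj) !tnthS.
exists i; apply/existsP; exists (lift ord0 j).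
rewrite !vlift eqSS Hj !tnthS Ha Hb Hc Hd !andbT /=.
apply/forallP => l; apply/implyP => /andP[l0 l1].
case: (unliftP ord0 l) l0 l1 => [l' ->|->]; last by rewrite !tnth0.
rewrite !(inj_eq lift_inj) !tnthS => l0 l1.
by move/forallP: Hl => /(_ l'); rewrite l0 l1.
Qed.


Definition chg k a : seq nat :=
  (if 0 < a then [:: a.-1] else [::]) ++ (if a.+1 < k then [:: a.+1] else [::]).

Definition ext k a (s' : seq nat) : seq (seq nat) :=
  if s' is c :: s'' then (if (a == k.-1) && (c == k.-1) then [:: k :: k :: s''] else [::])
  else [::].

Fixpoint nbr k (s : seq nat) : seq (seq nat) :=
  match s with
  | [::] => [::]
  | a :: s' =>
    if a == k then
      match s' with
      | _ :: s'' => (k.-1 :: k.-1 :: s'') :: [seq k :: k :: t | t <- nbr k s'']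
      | [::] => [::]
      end
    else [seq b :: s' | b <- chg k a] ++ [seq a :: t | t <- nbr k s'] ++ ext k a s'
  end.

Fixpoint dfc k (s : seq nat) : nat :=
  match s with
  | [::] => 0
  | a :: s' => if a == k then (if s' is _ :: s'' then 3 + dfc k s'' else 3)
     else (a == 0) + (if s' is c :: _ then (a == k.-1) && (c != k.-1) else a == k.-1) + dfc k s'
  end.

Lemma sind (P : seq nat -> Prop) :
  (forall s, (forall t, size t < size s -> P t) -> P s) -> forall s, P s.
Proof.
move=> H s; elim: (size s).+1 {-2}s (ltnSn (size s)) => [|m IHm] t Ht //.
apply: H => u Hu; apply: IHm; exact: leq_trans Hu Ht.
Qed.

Lemma adjl_kk k b : adjl k k b = false.
Proof. by rewrite /adjl ltnn andbF. Qed.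

Lemma adjl_aa k a : adjl k a a = false.
Proof. by apply/negbTE; rewrite /adjl; lia. Qed.

Lemma mem_chg k a b : a < k -> (b \in chg k a) = adjl k a b.
Proof.
move=> ak; rewrite /chg /adjl mem_cat ak.
case: ifP => a0; case: ifP => a1; rewrite ?in_cons ?in_nil ?orbF /=; lia.
Qed.

Lemma mem_ext k a b s' t' :
  (b :: t' \in ext k a s') = [&& a == k.-1, b == k & hp k s' t'].
Proof.
case: s' => [|c s''] /=; first by rewrite !andbF.
case: t' => [|d t''] /=; case: ifP => H; rewrite ?in_cons ?in_nil ?orbF ?eqseq_cons ?andbF //.
- by move/andP: H => [-> ->] /=; rewrite [t'' == _]eq_sym andbA.
- case: (a == k.-1) H => //= ->; by rewrite !andbF.
Qed.

Lemma mem_mapcons (a b : nat) t' L : (b :: t' \in [seq a :: t | t <- L]) = (b == a) && (t' \in L).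
Proof.
apply/mapP/andP => [[t tL [-> ->]]|[/eqP -> tL]]; [by rewrite eqxx | by exists t'].
Qed.

Lemma mem_mapcons2 (s : seq nat) b t' L : (b :: t' \in [seq x :: s | x <- L]) = (b \in L) && (t' == s).
Proof.
apply/mapP/andP => [[x xL [-> ->]]|[bL /eqP ->]]; [by rewrite eqxx | by exists b].
Qed.

Lemma mem_mapkk (k b d : nat) t'' L :
  (b :: d :: t'' \in [seq k :: k :: t | t <- L]) = [&& b == k, d == k & t'' \in L].
Proof.
apply/mapP/and3P => [[t tL [-> -> ->]]|[/eqP -> /eqP -> tL]]; [by rewrite !eqxx | by exists t''].
Qed.


Definition A k s t := is_pell k t && [|| st1 k s t, st2 k s t | st2 k t s].

Lemma nbrP k s t : 0 < k -> is_pell k s -> all (fun x => x <= k) s ->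
  size t = size s -> all (fun x => x <= k) t -> A k s t = (t \in nbr k s).
Proof.
move=> k0; elim/sind: s t => -[|a s'] IH t //=.
  by case: t.
have kk1 : (k == k.-1) = false by lia.
case: (eqVneq a k) => [->|ak] /=.
  case: s' IH => [|c s''] IH //= /andP[/eqP -> ps] /andP[_ /andP[_ Hs]].
  case: t => [|b [|d t'']] //= [st] /and3P[Hb Hd Ht].
  rewrite /A /= !adjl_kk kk1 /=.
  case: (eqVneq b k) => [->|bk]; case: (eqVneq d k) => [->|dk];
    rewrite /= ?eqxx ?kk1 ?andbF ?orbF /= ?in_cons ?eqseq_cons ?mem_mapkk ?eqxx ?kk1 /= ?andbF //.
  - by rewrite -IH //=; lia.
  - by rewrite (negbTE dk).
  - by rewrite (negbTE bk).
  rewrite (negbTE bk) /= orbF [t'' == _]eq_sym.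
  case: (eqVneq t'' s'') => [->|]; last by rewrite !andbF.
  by rewrite ps.
move=> ps' /andP[ak1 Hs]; have ak2 : a < k by lia.
case: t => [|b t'] //= [st] /andP[Hb Ht].
rewrite /A /= (negbTE ak) /= !andbF !orbF !mem_cat mem_mapcons2 mem_mapcons mem_ext mem_chg //.
case: (eqVneq b a) => [->|ba] /=.
  by rewrite (negbTE ak) adjl_aa /= !andbF !orbF -IH //= /A.
rewrite orbF [t' == _]eq_sym.
apply/idP/idP => [/andP[_ //]|/orP[/andP[ab /eqP ee]|/and3P[/eqP ak' /eqP bk' H]]].
- have bk : b < k by move: ab; rewrite /adjl => /and3P[].
  by rewrite (ltn_eqF bk) -ee ps' ab eqxx.
- rewrite bk' ak' !eqxx /= H orbT andbT.
  case: s' ps' H {IH st Hs} => [|c s''] //; case: t' {Ht} => [|d t''] //= + /and3P[/eqP c1 /eqP d1 /eqP e].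
  by rewrite c1 d1 (negbTE (_ : k.-1 != k)) ?eqxx -?e //; lia.
Qed.


Lemma nbr_uniq k s : 0 < k -> all (fun x => x <= k) s -> uniq (nbr k s).
Proof.
move=> k0; elim/sind: s => -[|a s'] IH //= /andP[ak1 Hs].
case: (eqVneq a k) => [eak|ak] /=; first subst a.
  case: s' IH Hs => [|c s''] IH //= /andP[_ Hs].
  rewrite mem_mapkk (_ : (k.-1 == k) = false) /=; last by lia.
  rewrite map_inj_uniq; first by apply: IH => //=; lia.
  by move=> x y [].
have ak2 : a < k by lia.
rewrite !cat_uniq map_inj_uniq; last by move=> x y [].
rewrite map_inj_uniq; last by move=> x y [].
rewrite IH //=.
have -> : uniq (chg k a) by rewrite /chg; case: ifP; case: ifP => //= _ _; rewrite in_cons in_nil orbF; lia.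
have -> : uniq (ext k a s') by case: s' {IH Hs} => [|c s''] //=; case: ifP.
rewrite /= andbT; apply/andP; split.
  apply/hasPn => -[|b t'] /=; first by rewrite mem_cat => /orP[/mapP[? ? //]|]; case: s' {IH Hs} => [|c ?] //=; case: ifP.
  rewrite mem_cat mem_mapcons mem_mapcons2 mem_chg // => /orP[/andP[/eqP -> _]|].
    by rewrite adjl_aa.
  rewrite mem_ext => /and3P[_ /eqP -> _].
  by rewrite /adjl ltnn !andbF.
apply/hasPn => -[|b t'] /=; first by case: s' {IH Hs} => [|c ?] //=; case: ifP => // _; rewrite in_cons in_nil.
rewrite mem_ext mem_mapcons => /and3P[_ /eqP -> _]; by rewrite eq_sym (negbTE ak).
Qed.

Lemma nbr_size k s : 0 < k -> is_pell k s -> all (fun x => x <= k) s ->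
  size (nbr k s) + dfc k s = 2 * size s.
Proof.
move=> k0; elim/sind: s => -[|a s'] IH //=.
case: (eqVneq a k) => [->|ak] /=.
  case: s' IH => [|c s''] IH //= /andP[_ ps] /andP[_ /andP[_ Hs]].
  rewrite size_map; have := IH s'' _ ps Hs; rewrite /=; lia.
move=> ps /andP[ak1 Hs]; have ak2 : a < k by lia.
rewrite !size_cat !size_map /chg size_cat; have := IH s' (ltnSn _) ps Hs.
move: (size (nbr k s')) (dfc k s') => N D.
case: s' {IH ps Hs} => [|c s''] /=;
case E1: (a == 0); case E2: (a == k.-1); try case E3: (c == k.-1);
rewrite /= ?E1 ?E2 ?E3 /=; repeat (case: ifP => ? /=); lia.
Qed.


Lemma card_pre n k (L : seq (seq nat)) : uniq L ->
  (forall t, t \in L -> size t = n /\ all (fun x => x <= k) t) ->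
  #|[set v : n.-tuple 'I_k.+1 | sv v \in L]| = size L.
Proof.
elim: L => [|x L IHL] /= uq H.
  by apply/eqP; rewrite cards_eq0; apply/eqP/setP => v; rewrite !inE.
have [sx ax] := H x (mem_head _ _).
have sz : size (map (@inord k) x) == n by rewrite size_map sx.
set v0 := Tuple sz.
have ev0 : sv v0 = x.
  rewrite /sv /= -map_comp; apply: map_id_in => y yx /=; apply: inordK.
  by move/allP: ax => /(_ y yx).
move/andP: uq => [xL uq].
rewrite (_ : [set v | sv v \in x :: L] = v0 |: [set v | sv v \in L]); last first.
  by apply/setP => v; rewrite !inE -ev0 (inj_eq (@sv_inj n k)).
rewrite cardsU1 inE ev0 xL IHL // => t tL; apply: H; by rewrite in_cons tL orbT.

Qed.

Fixpoint W k n : seq (seq nat) :=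
  if n is m.+1 then [seq x :: s | x <- iota 0 k.+1, s <- W k m] else [:: [::]].

Lemma WS k n : W k n.+1 = [seq x :: s | x <- iota 0 k.+1, s <- W k n].
Proof. by []. Qed.

Lemma W_uniq k n : uniq (W k n).
Proof.
elim: n => [|n IH] //; rewrite WS; apply: allpairs_uniq => //; first exact: iota_uniq.
by move=> [x s] [y t] _ _ /= [-> ->].
Qed.

Lemma memW k n t : (t \in W k n) = (size t == n) && all (fun x => x <= k) t.
Proof.
elim: n t => [|n IH] t; first by case: t.
rewrite WS.
apply/allpairsP/andP => [[[x s] [xi si ->]]|].
  move: xi si; rewrite mem_iota IH /= => xi /andP[/eqP -> ->]; rewrite eqxx andbT; split => //; lia.
case: t => [|x s] [sz]; first by [].
move=> /andP[xk ak]; exists (x, s); split => //; first by rewrite mem_iota /=; lia.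
by rewrite /= IH; apply/andP; split => //; move: sz; rewrite /=; lia.
Qed.

Lemma card_count n k (P : pred (seq nat)) :
  #|[set v : n.-tuple 'I_k.+1 | P (sv v)]| = count P (W k n).
Proof.
rewrite -size_filter -(@card_pre n k); first last.
- by move=> t; rewrite mem_filter memW => /andP[_ /andP[/eqP]].
- by rewrite filter_uniq // W_uniq.
congr #|pred_of_set _|; apply/setP => v; rewrite !inE mem_filter memW.
rewrite /sv size_map size_tuple eqxx /=.
suff -> : all (fun x => x <= k) [seq val x | x <- v] by rewrite andbT.
by apply/allP => y /mapP[z _ ->]; rewrite -ltnS ltn_ord.
Qed.

Lemma count_W k n (P : pred (seq nat)) :
  count P (W k n.+1) = sumn [seq count (fun s => P (x :: s)) (W k n) | x <- iota 0 k.+1].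
Proof.
rewrite WS; elim: (iota 0 k.+1) => [|x xs IH] //=.
by rewrite count_cat IH count_map.
Qed.

Lemma sum_const (f : nat -> nat) C l m : (forall x, m <= x < m + l -> f x = C) ->
  sumn [seq f x | x <- iota m l] = l * C.
Proof.
elim: l m => [|l IH] m H //=; rewrite IH ?H //; try lia.
move=> x Hx; apply: H; lia.
Qed.

Lemma sum_split k (f : nat -> nat) : 3 <= k ->
  sumn [seq f x | x <- iota 0 k.+1] = f 0 + sumn [seq f x | x <- iota 1 (k - 2)] + f k.-1 + f k.
Proof.
move=> k3; have -> : k.+1 = 1 + (k - 2) + 2 by lia.
rewrite !iotaD !map_cat !sumn_cat /=.
have -> : 1 + (k - 2) = k.-1 by lia.
have -> : k.-1.+1 = k by lia.
by rewrite !addn0 !add0n; lia.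
Qed.


Definition Zc k n := count (fun s => is_pell k s && (dfc k s == 0)) (W k n).
Definition Fc k n := count (fun s => is_pell k s && (dfc k s == 1)) (W k n).
Definition Qc k n := count (fun s => (head 0 s == k.-1) && (is_pell k s && (dfc k s == 1))) (W k n).

Lemma count_add T (f g h : pred T) s : (forall x, f x = g x + h x :> nat) ->
  count f s = count g s + count h s.
Proof. move=> H; elim: s => [|x s IH] //=; rewrite IH H; lia. Qed.

Lemma count0 T (f : pred T) s : (forall x, f x = false) -> count f s = 0.
Proof. by move=> H; rewrite (eq_count H) count_pred0. Qed.


Lemma dfc_mid k x s : 0 < x < k.-1 -> (is_pell k (x :: s) = is_pell k s) /\ dfc k (x :: s) = dfc k s.
Proof.
move=> Hx /=; rewrite (_ : (x == k) = false); last by lia.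
have x0 : (x == 0) = false by lia.
have x1 : (x == k.-1) = false by lia.
by split => //; rewrite x0 x1; case: s.
Qed.

Lemma dfc_0 k s : 3 <= k -> (is_pell k (0 :: s) = is_pell k s) /\ dfc k (0 :: s) = (dfc k s).+1.
Proof.
move=> k3 /=; rewrite (_ : (0 == k) = false); last by lia.
split => //; rewrite (_ : (0 == k.-1) = false); last by lia.
by case: s.
Qed.

Lemma dfc_k k s : 3 <= dfc k (k :: s).
Proof. by rewrite /= eqxx; case: s => // *; lia. Qed.

Lemma dfc_k1 k s : 3 <= k -> (is_pell k (k.-1 :: s) = is_pell k s) /\
  dfc k (k.-1 :: s) = (head 0 s != k.-1) + dfc k s.
Proof.
move=> k3 /=; rewrite (_ : (k.-1 == k) = false); last by lia.
split => //; rewrite (_ : (k.-1 == 0) = false) ?eqxx //=; last by lia.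
case: s => //= *; lia.
Qed.

Lemma hd1 k s : 3 <= k -> head 0 s == k.-1 -> 0 < dfc k s.
Proof.
move=> k3; elim: s => [|c s IH]; first by rewrite /=; lia.
rewrite [head _ _]/= => /eqP ->; have [_ ->] := dfc_k1 s k3.
case: (eqVneq (head 0 s) k.-1) => [e|e] /=; last by lia.
by have := IH (introT eqP e); lia.
Qed.

Lemma ZS k n : 3 <= k -> Zc k n.+1 = (k - 2) * Zc k n.
Proof.
move=> k3; rewrite {1}/Zc count_W sum_split // (@sum_const _ (Zc k n)); last first.
  move=> x Hx; apply: eq_count => s; have [-> ->] := @dfc_mid k x s ltac:(lia); done.
rewrite !count0 ?addn0 ?add0n // => s.
- by have := dfc_k k s; case: (dfc _ _) => //; case: (is_pell _ _).
- have [-> ->] := dfc_k1 s k3.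
  case: (eqVneq (head 0 s) k.-1) => [e|e] /=; last by rewrite andbF.
  by have := hd1 k3 (introT eqP e); rewrite add0n lt0n => /negbTE ->; rewrite andbF.
- by have [-> ->] := dfc_0 s k3; rewrite andbF.
Qed.

Lemma QS k n : 3 <= k -> Qc k n.+1 = Zc k n + Qc k n.
Proof.
move=> k3; rewrite {1}/Qc count_W sum_split // (@sum_const _ 0); last first.
  move=> x Hx; apply: count0 => s /=; have -> : (x == k.-1) = false by lia. done.
have h0 : (0 == k.-1) = false by lia.
have h1 : (k == k.-1) = false by lia.
have E0 : count (fun s => (head 0 (0 :: s) == k.-1) && (is_pell k (0 :: s) && (dfc k (0 :: s) == 1))) (W k n) = 0.
  by apply: count0 => s; rewrite [head _ _]/= h0.
have E1 : count (fun s => (head 0 (k :: s) == k.-1) && (is_pell k (k :: s) && (dfc k (k :: s) == 1))) (W k n) = 0.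
  by apply: count0 => s; rewrite [head _ _]/= h1.
rewrite E0 E1 muln0 add0n addn0.
apply: count_add => s; rewrite (_ : head 0 (k.-1 :: s) = k.-1) // eqxx andTb.
have [-> ->] := dfc_k1 s k3.
case: (eqVneq (head 0 s) k.-1) => [e|e] /=.
  by have := hd1 k3 (introT eqP e); rewrite add0n lt0n => /negbTE ->; rewrite andbF.
by rewrite add1n eqSS; case: (is_pell _ _); case: (_ == _).
Qed.

Lemma FS k n : 3 <= k -> Fc k n.+1 = (k - 2) * Fc k n + Zc k n + (Zc k n + Qc k n).
Proof.
move=> k3; rewrite {1}/Fc count_W sum_split // (@sum_const _ (Fc k n)); last first.
  move=> x Hx; apply: eq_count => s; have [-> ->] := @dfc_mid k x s ltac:(lia); done.
have E1 : count (fun s => is_pell k (k :: s) && (dfc k (k :: s) == 1)) (W k n) = 0.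
  apply: count0 => s; have := dfc_k k s; case: eqP => [->|] //; by rewrite andbF.
rewrite E1 addn0.
have -> : count (fun s => is_pell k (0 :: s) && (dfc k (0 :: s) == 1)) (W k n) = Zc k n.
  by apply: eq_count => s; have [-> ->] := dfc_0 s k3.
have -> : count (fun s => is_pell k (k.-1 :: s) && (dfc k (k.-1 :: s) == 1)) (W k n) = Zc k n + Qc k n.
  apply: count_add => s; have [-> ->] := dfc_k1 s k3.
  case: (eqVneq (head 0 s) k.-1) => [e|e] /=.
    by have := hd1 k3 (introT eqP e); rewrite add0n lt0n => /negbTE ->; rewrite andbF.
  by rewrite add1n eqSS; case: (is_pell _ _); case: (_ == _).
lia.
Qed.


Definition Ssum c n := \sum_(1 <= l < n.+1) (n - l + 1) * c ^ (n - l).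

Lemma SS c n : Ssum c n.+1 = n.+1 * c ^ n + Ssum c n.
Proof.
rewrite /Ssum big_ltn // big_add1 /=.
rewrite subSS subn0 addn1; congr (_ + _).
Qed.

Lemma Zc_val k n : 3 <= k -> Zc k n = (k - 2) ^ n.
Proof. by move=> k3; elim: n => [|n IH] //; rewrite ZS // IH expnS. Qed.

Lemma I1 k n : 3 <= k -> (k - 2) * Ssum (k - 2) n + Qc k n = n * (k - 2) ^ n + Ssum (k - 2) n.
Proof.
move=> k3; elim: n => [|n IH].
  rewrite /Qc /Ssum big_geq //= (_ : (0 == k.-1) = false) //; lia.
rewrite SS QS // Zc_val // expnS; nia.
Qed.

Lemma Fc_val k n : 3 <= k -> Fc k n = n * (k - 2) ^ (n - 1) + Ssum (k - 2) n.
Proof.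
move=> k3; elim: n => [|n IH]; first by rewrite /Ssum big_geq.
rewrite FS // IH SS Zc_val // subSS subn0.
have := I1 n k3.
case: n {IH} => [|n] /=; first by rewrite /Ssum big_geq //= ?muln0; lia.
rewrite subSS subn0 !expnS; nia.
Qed.


Lemma nbr_mem k s t : all (fun x => x <= k) s -> t \in nbr k s ->
  size t = size s /\ all (fun x => x <= k) t.
Proof.
elim/sind: s t => -[|a s'] IH t //= /andP[ak Hs].
case: (eqVneq a k) => [ea|na].
  subst a; case: s' IH Hs => [|c s''] IH //= /andP[ck Hs].
  rewrite in_cons => /orP[/eqP -> /=|/mapP[t'' tin ->] /=].
    by rewrite Hs (_ : k.-1 <= k) //; lia.
  have [-> ->] := IH s'' ltac:(by []) t'' Hs tin.
  by rewrite leqnn.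
have ak2 : a < k by lia.
rewrite !mem_cat => /orP[/mapP[b bin ->]|/orP[/mapP[t' tin ->]|]] /=.
- move: bin; rewrite mem_chg // /adjl => /and3P[_ _ bk].
  by rewrite Hs (ltnW bk).
- by have [-> ->] := IH s' (ltnSn _) t' Hs tin; rewrite ak.
case: s' {IH} Hs => [|c s''] //= /andP[ck Hs]; case: ifP => // _.
by rewrite in_cons in_nil orbF => /eqP -> /=; rewrite leqnn Hs.
Qed.

Lemma ones k n : 3 <= k -> is_pell k (nseq n 1) /\ dfc k (nseq n 1) = 0.
Proof.
move=> k3; elim: n => [|n [IH1 IH2]] //=.
have [p d] := @dfc_mid k 1 (nseq n 1) ltac:(lia).
by move: p d => /= -> ->.
Qed.

Unset Implicit Arguments.

Theorem corollary5p6 (n k : nat) :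
  1 <= n -> 3 <= k ->
  pell_maxdeg n k = 2 * n /\
  #|[set v in pell_vertices n k | pell_deg v == (pell_maxdeg n k).-1]| =
    n * (k - 2) ^ (n - 1) + \sum_(1 <= l < n.+1) (n - l + 1) * (k - 2) ^ (n - l).
Proof.
move=> n1 k3; have k0 : 0 < k by lia.
have allv : forall w : word n k, all (fun x => x <= k) (sv w).
  by move=> w; apply/allP => y /mapP[z _ ->]; rewrite -ltnS ltn_ord.
have szv : forall w : word n k, size (sv w) = n by move=> w; rewrite size_map size_tuple.
have degE : forall v : word n k, pellw v -> pell_deg v + dfc k (sv v) = 2 * n.
  move=> v pv; rewrite /pell_deg.
  rewrite (_ : [set w | pell_adj v w] = [set w : n.-tuple 'I_k.+1 | sv w \in nbr k (sv v)]); last first.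
    apply/setP => w; rewrite !inE /pell_adj pv /= !step1E !step2E -nbrP // ?szv //.
  rewrite card_pre.
  - by have := nbr_size k0 pv (allv v); rewrite szv.
  - exact: nbr_uniq.
  - by move=> t /(nbr_mem (allv v)); rewrite szv.
have Hmax : pell_maxdeg n k = 2 * n.
  apply/eqP; rewrite eqn_leq; apply/andP; split.
    by apply/bigmax_leqP => v; rewrite inE => pv; have := degE v pv; lia.
  set v1 := nseq_tuple n (inord 1 : 'I_k.+1).
  have sv1 : sv v1 = nseq n 1 by rewrite /sv /= map_nseq inordK //; lia.
  have [po dO] := ones n k3.
  have pv1 : pellw v1 by rewrite /pellw -/(sv v1) sv1.
  have := degE v1 pv1; rewrite sv1 dO addn0 => <-.
  by apply: leq_bigmax_cond; rewrite inE.
rewrite Hmax; split => //.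
rewrite (_ : [set v in pell_vertices n k | pell_deg v == (2 * n).-1] =
   [set v : n.-tuple 'I_k.+1 | is_pell k (sv v) && (dfc k (sv v) == 1)]); last first.
  apply/setP => v; rewrite !inE.
  have pE : pellw v = is_pell k (sv v) by [].
  rewrite -pE; case pv: (pellw v) => //=.
  have := degE v pv => H; apply/eqP/eqP; lia.
by rewrite (card_count n k (fun s => is_pell k s && (dfc k s == 1))) -/(Fc k n) Fc_val.
Qed.
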